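(* Let $a,b\in\mathrm{Act}$ with $a\neq b$. For every formula $\varphi$ of the one-variable, diamond-free fragment of $D\oplus_\subseteq K4$, $\varphi$ is satisfiable (at some state of some $D\oplus_\subseteq K4$ Kripke structure) if and only if $[\![\mathrm{trans}(\varphi)]\!]_L\neq\emptyset$.
   Context: $D\oplus_\subseteq K4$ Kripke structures are $M=(W,\xrightarrow{1},\xrightarrow{2},V)$ with $W$ nonempty, $\xrightarrow{1}$ serial ($\forall x\exists y.\,x\xrightarrow{1}y$), $\xrightarrow{2}$ transitive, $\xrightarrow{1}\subseteq\xrightarrow{2}$, and $V:W\to2^{\{p\}}$. Formulae of the one-variable diamond-free fragment: $\varphi::=p\mid\neg p\mid\varphi\vee\varphi\mid\varphi\wedge\varphi\mid[1]\varphi\mid[2]\varphi$, with $M,w\models p$ iff $p\in V(w)$, boolean connectives as usual, and $M,w\models[i]\varphi$ iff $M,w'\models\varphi$ for all $w'$ with $w\xrightarrow{i}w'$. recHML formulae over a finite action set $\mathrm{Act}$: $\varphi::=\mathrm{tt}\mid\mathrm{ff}\mid\varphi\vee\varphi\mid\varphi\wedge\varphi\mid\langle A\rangle\varphi\mid[A]\varphi\mid\min X.\varphi\mid\max X.\varphi\mid X$, with linear-time semantics over $\mathrm{Act}^\omega$: $[\![\mathrm{tt}]\!]_L=\mathrm{Act}^\omega$, $[\![\mathrm{ff}]\!]_L=\emptyset$, $\vee,\wedge$ union/intersection, $[\![\langle A\rangle\varphi,\sigma]\!]_L=\{ct\mid c\in A,t\in[\![\varphi,\sigma]\!]_L\}$,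 $[\![[A]\varphi,\sigma]\!]_L=\{t\mid\forall c\in A,\forall t'.\ t=ct'\Rightarrow t'\in[\![\varphi,\sigma]\!]_L\}$, $\min/\max$ as least/greatest fixpoints, $[\![X,\sigma]\!]_L=\sigma(X)$; singletons $\{c\}$ are written $c$. Translation: $\mathrm{trans}(\varphi)=\max X.(\langle a\rangle X\vee\langle b\rangle\langle a\rangle X)\wedge\varphi^t$, where $p^t=\langle b\rangle\mathrm{tt}$, $(\neg p)^t=[b]\mathrm{ff}$, $(\cdot)^t$ commutes with $\vee,\wedge$, $([1]\psi)^t=\max X.([b]X\wedge[a]\psi^t)$ and $([2]\psi)^t=\max X.([b]X\wedge[a]X\wedge[a]\psi^t)$ (with fresh variables $X$). *)

(* Defs.v *)
From mathcomp Require Import all_boot.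
Set Implicit Arguments. Unset Strict Implicit. Unset Printing Implicit Defensive.

Record kripke := Kripke {
  kW : Type;
  kR1 : kW -> kW -> Prop;
  kR2 : kW -> kW -> Prop;
  kV : kW -> bool;
  kR1_serial : forall x, exists y, kR1 x y;
  kR2_trans : forall x y z, kR2 x y -> kR2 y z -> kR2 x z;
  kR1_sub_R2 : forall x y, kR1 x y -> kR2 x y
}.
(* W nonempty is implied by the existence of the evaluation state below. *)

Inductive mform :=
| MP | MNotP
| MOr of mform & mform
| MAnd of mform & mform
| MBox1 of mform
| MBox2 of mform.

Fixpoint msat (M : kripke) (w : kW M) (f : mform) : Prop :=
  match f with
  | MP => kV w = true
  | MNotP => kV w = false
  | MOr f1 f2 => msat w f1 \/ msat w f2
  | MAnd f1 f2 => msat w f1 /\ msat w f2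
  | MBox1 g => forall w', kR1 w w' -> msat w' g
  | MBox2 g => forall w', kR2 w w' -> msat w' g
  end.

Definition msatisfiable (f : mform) : Prop :=
  exists (M : kripke) (w : kW M), msat w f.

Inductive hml (Act : finType) :=
| Htt | Hff
| HOr of hml Act & hml Act
| HAnd of hml Act & hml Act
| HDia of {set Act} & hml Act
| HBox of {set Act} & hml Act
| HMin of nat & hml Act
| HMax of nat & hml Act
| HVar of nat.
Arguments Htt {Act}. Arguments Hff {Act}. Arguments HVar {Act}.

Definition trace (Act : Type) := nat -> Act.
Definition ttail (Act : Type) (t : trace Act) : trace Act := fun n => t n.+1.

Definition env (Act : Type) := nat -> (trace Act -> Prop).
Definition upd (Act : Type) (s : env Act) (X : nat) (S : trace Act -> Prop) : env Act :=
  fun Y => if Y == X then S else s Y.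

(* min/max are the least/greatest fixpoints, given by Knaster-Tarski
   (intersection of pre-fixpoints / union of post-fixpoints). *)
Fixpoint hsem (Act : finType) (f : hml Act) (s : env Act) : trace Act -> Prop :=
  match f with
  | Htt => fun _ => True
  | Hff => fun _ => False
  | HOr f1 f2 => fun t => hsem f1 s t \/ hsem f2 s t
  | HAnd f1 f2 => fun t => hsem f1 s t /\ hsem f2 s t
  | HDia A g => fun t => t 0 \in A /\ hsem g s (ttail t)
  | HBox A g => fun t => t 0 \in A -> hsem g s (ttail t)
  | HMin X g => fun t => forall S : trace Act -> Prop,
       (forall u, hsem g (upd s X S) u -> S u) -> S t
  | HMax X g => fun t => exists S : trace Act -> Prop,
       (forall u, S u -> hsem g (upd s X S) u) /\ S t
  | HVar X => s X
  end.

Definition empty_env (Act : Type) : env Act := fun _ _ => False.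

Fixpoint msize (f : mform) : nat :=
  match f with
  | MP | MNotP => 1
  | MOr f1 f2 | MAnd f1 f2 => (msize f1 + msize f2).+1
  | MBox1 g | MBox2 g => (msize g).+1
  end.

(* Fresh variables: the binder for ([i]psi)^t is X_(msize ([i]psi)); all variables
   bound inside psi^t have strictly smaller indices, and all indices are >= 1. *)
Fixpoint transt (Act : finType) (a b : Act) (f : mform) : hml Act :=
  match f with
  | MP => HDia [set b] Htt
  | MNotP => HBox [set b] Hff
  | MOr f1 f2 => HOr (transt a b f1) (transt a b f2)
  | MAnd f1 f2 => HAnd (transt a b f1) (transt a b f2)
  | MBox1 g => let X := msize f in
      HMax X (HAnd (HBox [set b] (HVar X)) (HBox [set a] (transt a b g)))
  | MBox2 g => let X := msize f in
      HMax X (HAnd (HAnd (HBox [set b] (HVar X)) (HBox [set a] (HVar X)))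
                   (HBox [set a] (transt a b g)))
  end.

Definition trans (Act : finType) (a b : Act) (f : mform) : hml Act :=
  HAnd (HMax 0 (HOr (HDia [set a] (HVar 0)) (HDia [set b] (HDia [set a] (HVar 0)))))
       (transt a b f).

(* Main.v *)
From Stdlib Require Import Relations ClassicalEpsilon FunctionalExtensionality.
Require Import Defs.
From mathcomp Require Import all_boot.
Set Implicit Arguments. Unset Strict Implicit. Unset Printing Implicit Defensive.

Lemma upd_eq (Act : Type) (s : env Act) X S : upd s X S X = S.
Proof. by rewrite /upd eqxx. Qed.

Definition PF (Act : finType) (a b : Act) (S0 : trace Act -> Prop) :=
  forall u, S0 u -> (u 0 = a /\ S0 (ttail u)) \/
                    (u 0 = b /\ ttail u 0 = a /\ S0 (ttail (ttail u))).

Definition R1r (Act : finType) (a b : Act) (S0 : trace Act -> Prop)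
  (x y : {u : trace Act | S0 u}) : Prop :=
  (proj1_sig x 0 = a /\ proj1_sig y = ttail (proj1_sig x)) \/
  (proj1_sig x 0 = b /\ proj1_sig y = ttail (ttail (proj1_sig x))).

Lemma R1r_serial (Act : finType) (a b : Act) (S0 : trace Act -> Prop) (H : PF a b S0) x :
  exists y, @R1r _ a b S0 x y.
Proof.
case: x => u Hu; case: (H u Hu) => [[h1 h2]|[h1 [h2 h3]]].
- by exists (exist _ (ttail u) h2); left.
- by exists (exist _ (ttail (ttail u)) h3); right.
Qed.

Definition mkK (Act : finType) (a b : Act) (S0 : trace Act -> Prop) (H : PF a b S0) : kripke :=
  {| kW := {u : trace Act | S0 u};
     kR1 := @R1r _ a b S0;
     kR2 := clos_trans _ (@R1r _ a b S0);
     kV := fun x => proj1_sig x 0 == b;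
     kR1_serial := R1r_serial H;
     kR2_trans := t_trans _ _;
     kR1_sub_R2 := t_step _ _ |}.

Lemma dir1 (Act : finType) (a b : Act) (hab : a != b) (S0 : trace Act -> Prop) (H : PF a b S0) g :
  forall s v (Hv : S0 v), hsem (transt a b g) s v -> @msat (mkK H) (exist _ v Hv) g.
Proof.
elim: g => [||g1 IH1 g2 IH2|g1 IH1 g2 IH2|g IH|g IH] s v Hv /=.
- by rewrite in_set1 => -[].
- by rewrite in_set1; case: (v 0 == b) => // /(_ isT).
- by case=> h; [left; apply: IH1 h|right; apply: IH2 h].
- by case=> h1 h2; split; [apply: IH1 h1|apply: IH2 h2].
- case=> S [HS Sv] [w' Hw'] /= HR.
  have [HSb HSa] := HS v Sv; rewrite upd_eq in HSb.
  case: HR => /= [[h1 h2]|[h1 h2]]; subst w'.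
  + by apply: (IH _ _ _ (HSa _)); rewrite h1 in_set1.
  + have Stv := HSb (ltac:(by rewrite h1 in_set1)).
    have [_ HSa'] := HS _ Stv.
    apply: (IH _ _ _ (HSa' _)).
    case: (H v Hv) => [[h3 _]|[_ [h3 _]]]; last by rewrite h3 in_set1.
    by move: hab; rewrite -h3 h1 eqxx.
- case=> S [HS Sv] w' HR.
  suff : S (proj1_sig w') /\
         hsem (transt a b g) (upd s (msize g).+1 S) (proj1_sig w').
    by case: w' HR => w' Hw' _ /= [_ h]; apply: (IH _ _ _ h).
  move: Sv; have -> : v = proj1_sig (exist S0 v Hv) by [].
  elim: HR => {w'} [x y HR|x y z _ IHa _ IHb] Sx; last by apply: IHb; case: (IHa Sx).
  case: x y HR Sx => x Hx [y Hy] /= HR Sx.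
  have [[HSb HSa] HSp] := HS x Sx; rewrite !upd_eq in HSb HSa.
  case: HR => [[h1 h2]|[h1 h2]]; simpl in h1, h2; subst y.
  + by split; [apply: HSa|apply: HSp]; rewrite h1 in_set1.
  + have Stx := HSb (ltac:(by rewrite h1 in_set1)).
    have [[_ HSa'] HSp'] := HS _ Stx; rewrite upd_eq in HSa'.
    have h3 : ttail x 0 \in [set a].
      case: (H x Hx) => [[h3 _]|[_ [h3 _]]]; last by rewrite h3 in_set1.
      by move: hab; rewrite -h3 h1 eqxx.
    by split; [apply: HSa'|apply: HSp'].
Qed.

Fixpoint go (Act : Type) (a b : Act) (p : nat -> bool) (k n : nat) {struct n} : Act :=
  match n with
  | 0 => if p k then b else a
  | m.+1 => match m with
            | 0 => if p k then a else go a b p k.+1 m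
            | n'.+1 => if p k then go a b p k.+1 n' else go a b p k.+1 m
            end
  end.

Lemma T_true (Act : Type) (a b : Act) (p : nat -> bool) k : p k ->
  go a b p k 0 = b /\ ttail (go a b p k) 0 = a /\ ttail (ttail (go a b p k)) = go a b p k.+1.
Proof.
by move=> h; rewrite /ttail /= h; do 2 (split=> //).
Qed.

Lemma T_false (Act : Type) (a b : Act) (p : nat -> bool) k : ~~ p k ->
  go a b p k 0 = a /\ ttail (go a b p k) = go a b p k.+1.
Proof.
move=> /negbTE h; rewrite /ttail /= h; split=> //.
by apply: functional_extensionality => -[|n] /=; rewrite ?h.
Qed.

Lemma R2_path (M : kripke) (pth : nat -> kW M) (Hp : forall n, kR1 (pth n) (pth n.+1)) k m :
  k < m -> kR2 (pth k) (pth m).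
Proof.
elim: m => // m IH; rewrite ltnS leq_eqVlt => /orP [/eqP ->|h].
  exact: kR1_sub_R2.
exact: kR2_trans (IH h) (kR1_sub_R2 (Hp m)).
Qed.

Lemma dir2 (Act : finType) (a b : Act) (hab : a != b) (M : kripke) (pth : nat -> kW M)
  (Hp : forall n, kR1 (pth n) (pth n.+1)) g :
  forall k s, msat (pth k) g -> hsem (transt a b g) s (go a b (fun j => kV (pth j)) k).
Proof.
have ab : (a \in [set b]) = false by rewrite in_set1; apply/negbTE.
have ba : (b \in [set a]) = false by rewrite in_set1 eq_sym; apply/negbTE.
set p := fun j => kV (pth j).
elim: g => [||g1 IH1 g2 IH2|g1 IH1 g2 IH2|g IH|g IH] k s /=.
- by rewrite /p => ->; rewrite in_set1.
- by rewrite /p => ->; rewrite ab.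
- by case=> h; [left; apply: IH1 h|right; apply: IH2 h].
- by case=> h1 h2; split; [apply: IH1 h1|apply: IH2 h2].
- move=> Hb.
  set S := fun u => u = go a b p k \/ (p k /\ u = ttail (go a b p k)).
  have Hn : hsem (transt a b g) (upd s (msize g).+1 S) (go a b p k.+1).
    by apply: IH; apply: Hb; apply: Hp.
  exists S; split; last by left.
  move=> u; rewrite upd_eq => -[->|[pk ->]].
  + case pk: (p k).
    * have [h1 [h2 h3]] := T_true a b pk; rewrite h1 ba; split=> // _; by right.
    * have [h1 h2] := T_false a b (negbT pk); rewrite h1 ab h2; split=> // _.
  + have [h1 [h2 h3]] := T_true a b pk; rewrite h2 ab h3; split=> // _.
- move=> Hb.
  set S := fun u => exists j, k <= j /\ (u = go a b p j \/ (p j /\ u = ttail (go a b p j))).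
  have Hn : forall j, k <= j -> hsem (transt a b g) (upd s (msize g).+1 S) (go a b p j.+1).
    by move=> j hj; apply: IH; apply: Hb; apply: R2_path.
  exists S; split; last by exists k; split=> //; left.
  move=> u; rewrite !upd_eq => -[j [hj [->|[pj ->]]]].
  + case pj: (p j).
    * have [h1 [h2 h3]] := T_true a b pj; rewrite h1 ba; split; [split=> // _|by []].
      by exists j; split=> //; right.
    * have [h1 h2] := T_false a b (negbT pj); rewrite h1 ab h2; split; [split=> // _|by move=> _; apply: Hn].
      by exists j.+1; split; [apply: leqW|left].
  + have [h1 [h2 h3]] := T_true a b pj; rewrite h2 ab h3; split; [split=> // _|by move=> _; apply: Hn].
    by exists j.+1; split; [apply: leqW|left].
Qed.

Theorem mainTheorem19 (Act : finType) (a b : Act) (hab : a != b) (phi : mform) :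
  msatisfiable phi <-> (exists t : trace Act, hsem (trans a b phi) (@empty_env Act) t).
Proof.
split.
- case=> M [w Hw].
  pose next (x : kW M) : kW M :=
    proj1_sig (constructive_indefinite_description _ (kR1_serial x)).
  have Hnext x : kR1 x (next x) := proj2_sig (constructive_indefinite_description _ (kR1_serial x)).
  pose pth n := iter n next w.
  have Hp n : kR1 (pth n) (pth n.+1) by rewrite /pth iterS; apply: Hnext.
  set p := fun j => kV (pth j).
  exists (go a b p 0); split; last by apply: dir2 => //.
  exists (fun u => exists k, u = go a b p k); split; last by exists 0.
  move=> u [k ->] /=; rewrite upd_eq; case pk: (p k).
  + have [h1 [h2 h3]] := T_true a b pk; right; rewrite ?h1 h3 h2 !in_set1 !eqxx.
    by split=> //; split=> //; exists k.+1.
  + have [h1 h2] := T_false a b (negbT pk); left; rewrite ?h1 h2 in_set1 eqxx.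
    by split=> //; exists k.+1.
- case=> t [[S0 [HS0 St]] Ht].
  rewrite /= upd_eq in HS0.
  have H : PF a b S0.
    move=> u /HS0 [[h1 h2]|[h1 [h2 h3]]]; move: h1; rewrite in_set1 => /eqP h1.
    + by left.
    + by move: h2; rewrite in_set1 => /eqP h2; right.
  exists (mkK H), (exist _ t St).
  exact: dir1 Ht.
Qed.
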